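(* Let $\Lambda=k(\Gamma,\mathcal{A})$ be a generalized path algebra without relations ($I=\emptyset$), $i\in\Gamma_0$, and $M$ a finite-dimensional right $A_i$-module. Let $((M_j)_j,(\phi_\alpha)_\alpha)$ be the representation of $\mathcal{C}_i(M)$. Then $M_i=M$, and for $j\neq i$ we have $M_j\cong A_j^{n_j}$ as $A_j$-modules, where $$n_j=\sum_{\gamma:\,i=i_0\to i_1\to\cdots\to i_{r+1}=j}(\dim_kM)(\dim_kA_{i_1})\cdots(\dim_kA_{i_r}),$$ the sum running over all paths $\gamma$ from $i$ to $j$ in $\Gamma$. In particular $M_j=0$ if there is no path from $i$ to $j$.
   Context: $k$ is an algebraically closed field, $\Gamma$ a finite acyclic quiver, and $\mathcal{A}=\{A_i:i\in\Gamma_0\}$ finite-dimensional basic $k$-algebras. The generalized path algebra $k(\Gamma,\mathcal{A})$ is spanned by $\mathcal{A}$-paths $a_1\beta_1\cdots a_n\beta_na_{n+1}$ ($\beta_1\cdots\beta_n$ a path of $\Gamma$, $a_i\in A_{s(\beta_i)}$, $a_{n+1}\in A_{e(\beta_n)}$), modulo multilinearity in each entry, with concatenation product (multiplying adjacent algebra entries, or $0$ if paths don't compose). $A_{\mathcal{A}}=\prod_jA_j\subseteq\Lambda$. An $A_i$-module $M$ is an $A_{\mathcal{A}}$-module via the projection to $A_i$. The cone is $\mathcal{C}_i(M)=M\otimes_{A_{\mathcal{A}}}\Lambda$. The representation of a right $\Lambda$-module $X$ has $X_j=X\cdot1_j$ and $\phi_\alpha(x)=x\alpha$. *)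

(* Defs.v *)
From HB Require Import structures.
From mathcomp Require Import all_boot all_order all_algebra.
From mathcomp Require Import falgebra.
Set Implicit Arguments. Unset Strict Implicit. Unset Printing Implicit Defensive.
Import GRing.Theory.
Local Open Scope ring_scope.

Section Quiver.
Variables (V E : finType) (s t : E -> V).

Fixpoint is_qpath (i j : V) (p : seq E) : bool :=
  match p with
  | [::] => i == j
  | b :: p' => (s b == i) && is_qpath (t b) j p'
  end.

Definition acyclic : Prop :=
  forall (v : V) (p : seq E), p != [::] -> ~~ is_qpath v v p.

(* n_j = sum over paths gamma : i = i0 -> i1 -> ... -> i_(r+1) = j of     *)
(* dM * dA(i1) * ... * dA(ir); the intermediate vertices i1..ir are the    *)
(* sources of all arrows of gamma but the first.  In an acyclic quiver     *)
(* every path has fewer than #|V| arrows, so the length bound below only   *)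
(* makes the (finite) sum over all paths explicit.                          *)
Definition ncoef (dM : nat) (dA : V -> nat) (i j : V) : nat :=
  (\sum_(r < #|V|.+1) \sum_(p : r.-tuple E | is_qpath i j p)
      (dM * \prod_(b <- behead p) dA (s b)))%N.

End Quiver.

Section Alg.
Variable k : fieldType.

Definition in_jacobson (R : falgType k) (x : R) : Prop :=
  forall a : R, (1 - a * x) \is a GRing.unit.

(* R is basic iff R / J(R) is a product of copies of k; over an             *)
(* algebraically closed field this is: R / J(R) is commutative.             *)
Definition basic (R : falgType k) : Prop :=
  forall x y : R, in_jacobson (x * y - y * x).

Record rmod (R : algType k) := RMod {
  rcar :> vectType k;
  ract : rcar -> R -> rcar;
  ract_linl : forall (r : R) (c : k) (x y : rcar),
      ract (c *: x + y) r = c *: ract x r + ract y r;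
  ract_linr : forall (x : rcar) (c : k) (r r' : R),
      ract x (c *: r + r') = c *: ract x r + ract x r';
  ract1 : forall x : rcar, ract x 1 = x;
  ractM : forall (x : rcar) (r r' : R), ract (ract x r) r' = ract x (r * r')
}.

Definition lin_map (U W : lmodType k) (f : U -> W) : Prop :=
  forall (c : k) (x y : U), f (c *: x + y) = c *: f x + f y.

Definition alg_hom (R B : algType k) (g : R -> B) : Prop :=
  lin_map g /\ (forall x y, g (x * y) = g x * g y) /\ g 1 = 1.

Definition bilin (U : lmodType k) (R : algType k) (W : lmodType k)
  (f : U -> R -> W) : Prop :=
  (forall (r : R) (c : k) (x y : U), f (c *: x + y) r = c *: f x r + f y r) /\
  (forall (x : U) (c : k) (r r' : R), f x (c *: r + r') = c *: f x r + f x r').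

End Alg.

(* The generalized path algebra k(Gamma, A) (no relations), by its          *)
(* universal property, and the cone C_i(M) = M (x)_{A_A} Lambda, by the     *)
(* universal property of the tensor product.                                *)
Section GPA.
Variables (k : fieldType) (V E : finType) (s t : E -> V) (A : V -> falgType k).

(* Data of an algebra map k(Gamma,A) -> B: multiplicative linear maps       *)
(* f v : A v -> B whose units are orthogonal idempotents summing to 1       *)
(* (i.e. an algebra map A_A = prod_v A_v -> B), and images b e of the       *)
(* arrows with b e = f (s e) 1 * b e * f (t e) 1.                           *)
Definition gpa_data (B : algType k) (f : forall v, A v -> B) (b : E -> B) : Prop :=
  (forall v, lin_map (f v)) /\
  (forall v (x y : A v), f v (x * y) = f v x * f v y) /\
  (\sum_(v : V) f v 1 = 1) /\
  (forall v w, v != w -> forall (x : A v) (y : A w), f v x * f w y = 0) /\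
  (forall e, f (s e) 1 * b e * f (t e) 1 = b e).

(* (L, emb, arr) is the generalized path algebra k(Gamma, A): emb v embeds  *)
(* A v (as the trivial A-paths at v) and arr e is the arrow e; it is the    *)
(* free algebra on these data (= tensor algebra T_{A_A}(+_e A_s(e) (x)_k    *)
(* A_t(e)), spanned by the A-paths a1 b1 a2 ... bn a(n+1)).                 *)
Definition is_gpa (L : falgType k) (emb : forall v, A v -> L) (arr : E -> L) : Prop :=
  gpa_data emb arr /\
  forall (B : algType k) (f : forall v, A v -> B) (b : E -> B),
    gpa_data f b ->
    (exists g : L -> B, alg_hom g /\ (forall v (x : A v), g (emb v x) = f v x) /\
                        (forall e, g (arr e) = b e)) /\
    (forall g1 g2 : L -> B, alg_hom g1 -> alg_hom g2 ->
       (forall v (x : A v), g1 (emb v x) = g2 (emb v x)) ->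
       (forall e, g1 (arr e) = g2 (arr e)) -> g1 =1 g2).

(* A map sigma : M x L -> W is A_A-balanced, where the A_i-module M is an   *)
(* A_A-module via the projection A_A -> A_i.                                *)
Definition balanced (L : falgType k) (emb : forall v, A v -> L) (i : V)
  (M : rmod (A i)) (W : lmodType k) (sigma : M -> L -> W) : Prop :=
  (forall (a : A i) (m : M) (l : L), sigma (ract m a) l = sigma m (emb i a * l)) /\
  (forall w, w != i -> forall (a : A w) (m : M) (l : L), sigma m (emb w a * l) = 0).

(* (X, tau) is the right L-module M (x)_{A_A} L, tau m l = m (x) l.         *)
Definition is_cone (L : falgType k) (emb : forall v, A v -> L) (i : V)
  (M : rmod (A i)) (X : rmod L) (tau : M -> L -> X) : Prop :=
  bilin tau /\ balanced emb tau /\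
  (forall (m : M) (l l' : L), tau m (l * l') = ract (tau m l) l') /\
  forall (W : lmodType k) (sigma : M -> L -> W), bilin sigma -> balanced emb sigma ->
    (exists h : X -> W, lin_map h /\ forall m l, h (tau m l) = sigma m l) /\
    (forall h1 h2 : X -> W, lin_map h1 -> lin_map h2 ->
       (forall m l, h1 (tau m l) = h2 (tau m l)) -> h1 =1 h2).

End GPA.

(* y lies in X_j = X * e, where e = 1_j. *)
Definition in_comp (k : fieldType) (L : falgType k) (X : rmod L) (e : L) (y : X) : Prop :=
  exists z : X, y = ract z e.

(* Main.v *)
Require Import Defs.
From HB Require Import structures.
From mathcomp Require Import all_boot all_order all_algebra.
From mathcomp Require Import falgebra.
Import GRing.Theory.

Set Implicit Arguments. Unset Strict Implicit. Unset Printing Implicit Defensive.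

Section Comb.
Variables (V E : finType) (s t : E -> V).

Definition endp (x : V) (p : seq E) := last x (map t p).

Lemma qpath_end x y p : is_qpath s t x y p -> y = endp x p.
Proof. by elim: p x => [|b p IH] x /=; [move/eqP | case/andP=> _ /IH]. Qed.

Lemma qpath_rcons x y p e :
  is_qpath s t x y (rcons p e) = is_qpath s t x (s e) p && (t e == y).
Proof.
elim: p x => [|b p IH] x /=; first by rewrite eq_sym.
by rewrite IH andbA.
Qed.

Lemma endp_rcons x p e : endp x (rcons p e) = t e.
Proof. by rewrite /endp map_rcons last_rcons. Qed.

Lemma qpath_take x y p n :
  is_qpath s t x y p -> is_qpath s t x (endp x (take n p)) (take n p).
Proof.
elim: p x n => [|b p IH] x [|n] //=.
by case/andP=> -> /(IH _ n).
Qed.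

Lemma qpath_uniq x y p : acyclic s t -> is_qpath s t x y p -> uniq (x :: map t p).
Proof.
move=> ac; elim: p x => [|b p IH] x //= /andP[sb qp].
have := IH _ qp; rewrite /= => ->; rewrite andbT.
apply/negP=> xin.
set q := b :: p.
have qq : is_qpath s t x y q by rewrite /= sb.
have xin' : x \in map t q by [].
set n := index x (map t q).
have nlt : n < size q by rewrite -(size_map t) index_mem.
have := qpath_take n.+1 qq.
have -> : endp x (take n.+1 q) = x.
  rewrite /endp map_take (take_nth x) ?size_map //= last_rcons.
  by rewrite nth_index.
apply/negP; apply: ac; by rewrite (take_nth b nlt) -size_eq0 size_rcons.
Qed.

Lemma qpath_size x y p : acyclic s t -> is_qpath s t x y p -> size p < #|V|.
Proof.
move=> ac /(qpath_uniq ac) /card_uniqP.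
rewrite /= size_map => <-; exact: max_card.
Qed.

Lemma qpath_nil_acyc x p : acyclic s t -> is_qpath s t x x p -> p = [::].
Proof. by move=> ac; case: p => // b p q; have := ac x (b :: p) isT; rewrite q. Qed.

Variable (i : V) (dM : nat) (dA : V -> nat).

Fixpoint coordlists (q : seq E) : seq (seq nat) :=
  if q is b :: q' then [seq u :: us | u <- iota 0 (dA (s b)), us <- coordlists q']
  else [:: [::]].

Lemma size_coordlists q : size (coordlists q) = (\prod_(b <- q) dA (s b))%N.
Proof.
elim: q => [|b q IH]; first by rewrite big_nil.
by rewrite /= size_allpairs size_iota IH big_cons.
Qed.

Lemma uniq_coordlists q : uniq (coordlists q).
Proof.
elim: q => [|b q IH] //=; apply: allpairs_uniq => //; first exact: iota_uniq.
by move=> [a1 b1] [a2 b2] _ _ /= [-> ->].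
Qed.

Lemma mem_coordlists q us :
  (us \in coordlists q) = all2 (fun u b => u < dA (s b)) us q.
Proof.
elim: q us => [|b q IH] [|u us] //=.
- by apply/allpairsP => -[[x y] [_ _ /=]].
- apply/allpairsP/andP => [[[x y] [/= xi yi [-> ->]]]|[ub usq]].
    by rewrite -IH yi mem_iota /= in xi *; split.
  by exists (u, us); rewrite mem_iota /= ub IH usq.
Qed.

Lemma all2_rcons (r : nat -> E -> bool) us q u e :
  all2 r (rcons us u) (rcons q e) = all2 r us q && r u e.
Proof.
elim: us q => [|x us IH] [|b q] //=; first by rewrite andbT.
  by case: q => [|? ?] /=; rewrite andbF.
  by case: us {IH} => [|? ?] /=; rewrite andbF.
- by rewrite IH andbA.
Qed.

Lemma all2_nil_rcons (r : nat -> E -> bool) q e : all2 r [::] (rcons q e) = false.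
Proof. by case: q. Qed.

Definition K := #|V|.

Definition tr (r : nat) : seq (seq E) := [seq val x | x <- enum {: r.-tuple E}].

Lemma mem_tr r p : (p \in tr r) = (size p == r).
Proof.
apply/mapP/eqP => [[x _ ->]|<-]; first exact: size_tuple.
by exists (in_tuple p); rewrite ?mem_enum.
Qed.

Lemma uniq_tr r : uniq (tr r).
Proof. by rewrite map_inj_uniq ?enum_uniq //; apply: val_inj. Qed.

Definition PL (j : V) : seq (seq E) :=
  [seq p | r <- iota 1 K, p <- [seq q <- tr r | is_qpath s t i j q]].

Lemma mem_PL j p : (p \in PL j) = [&& 0 < size p, size p <= K & is_qpath s t i j p].
Proof.
apply/allpairsPdep/and3P => [[r [q [ri]]]|[p0 pK pq]].
  rewrite mem_filter mem_tr => /andP[qq /eqP qr] ->.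
  by rewrite mem_iota qr add1n ltnS in ri *; case/andP: ri => -> ->.
exists (size p), p; split => //.
  by rewrite mem_iota p0 add1n ltnS.
by rewrite mem_filter pq mem_tr eqxx.
Qed.

Lemma uniq_PL j : uniq (PL j).
Proof.
apply: allpairs_uniq_dep; first exact: iota_uniq.
  by move=> r _; rewrite filter_uniq // uniq_tr.
move=> [r1 p1] [r2 p2] /allpairsPdep [x1 [y1 [_ h1 [-> ->]]]]
                     /allpairsPdep [x2 [y2 [_ h2 [-> ->]]]] /= e.
move: h1 h2; rewrite !mem_filter !mem_tr => /andP[_ /eqP <-] /andP[_ /eqP <-].
by rewrite e.
Qed.

Definition RawFree := (seq E * (nat * seq nat))%type.

Definition FL (j : V) : seq RawFree :=
  [seq (p, tu) | p <- PL j, tu <- [seq (t0, us) | t0 <- iota 0 dM, us <- coordlists (behead p)]].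

Definition validF (j : V) (fw : RawFree) :=
  [&& fw.1 \in PL j, fw.2.1 < dM & fw.2.2 \in coordlists (behead fw.1)].

Lemma mem_FL j fw : (fw \in FL j) = validF j fw.
Proof.
case: fw => p [t0 us]; rewrite /validF /=.
apply/allpairsPdep/and3P => [[q [[x y] [qi /allpairsP [[a b] [/= ai bi eab]] e]]]|[pi ti ui]].
  case: eab => ?? ; case: e => ???; subst.
  by rewrite mem_iota in ai.
exists p, (t0, us); split => //; apply/allpairsP; exists (t0, us); split => //.
by rewrite mem_iota.
Qed.

Lemma uniq_FL j : uniq (FL j).
Proof.
apply: allpairs_uniq_dep; first exact: uniq_PL.
  move=> p _; apply: allpairs_uniq; [exact: iota_uniq|exact: uniq_coordlists|].
  by move=> [a1 b1] [a2 b2] _ _ /= [-> ->].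
by move=> [r1 p1] [r2 p2] _ _ /= [-> ->].
Qed.

Lemma size_FL j : j != i ->
  size (FL j) = ncoef s t dM dA i j.
Proof.
move=> ji.
rewrite size_allpairs_dep sumnE big_map /ncoef.
rewrite /PL big_allpairs_dep /=.
rewrite -(big_mkord xpredT (fun r => \sum_(p : r.-tuple E | is_qpath s t i j p) (dM * \prod_(b <- behead p) dA (s b)))%N).
rewrite big_nat_recl //.
have -> : (\sum_(p : 0.-tuple E | is_qpath s t i j p) (dM * \prod_(b <- behead p) dA (s b)))%N = 0%N.
  by apply: big1 => p; rewrite tuple0 /= eq_sym (negbTE ji).
rewrite add0n.
rewrite -{1}[1%N]addn0 iotaDl big_map /= /index_iota subn0.
apply: eq_bigr => r _; rewrite add1n.
rewrite big_filter /tr big_map big_enum_cond /=.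
apply: eq_bigr => p _.
by rewrite size_allpairs size_iota size_coordlists.
Qed.

Definition RawWord := (nat + RawFree * nat)%type.

Definition WL : seq RawWord :=
  [seq inl t0 | t0 <- iota 0 dM] ++
  [seq inr fwu | j <- enum V, fwu <- [seq (fw, u) | fw <- FL j, u <- iota 0 (dA j)]].

Definition endW (w : RawWord) : V :=
  match w with inl _ => i | inr (fw, _) => endp i fw.1 end.

Definition validW (w : RawWord) :=
  match w with
  | inl t0 => t0 < dM
  | inr (fw, u) => validF (endp i fw.1) fw && (u < dA (endp i fw.1))
  end.

Lemma validF_end j fw : validF j fw -> j = endp i fw.1.
Proof. by case/and3P; rewrite mem_PL => /and3P[_ _ /qpath_end]. Qed.

Lemma mem_WL w : (w \in WL) = validW w.
Proof.
rewrite mem_cat; case: w => [t0|[fw u]] /=.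
  rewrite orbC; have -> : (inl t0 \in [seq inr fwu | j <- enum V, fwu <- [seq (fw, u) | fw <- FL j, u <- iota 0 (dA j)]]) = false.
    by apply/negP => /allpairsPdep [? [? [_ _ //]]].
  by rewrite /= mem_map ?mem_iota //; move=> ?? [].
have -> : (inr (fw, u) \in [seq inl t0 | t0 <- iota 0 dM]) = false.
  by apply/negP => /mapP [].
apply/allpairsPdep/andP => [[j [[fw' u'] [_ /allpairsP [[a b] [/= ai bi eab]] e]]]|[vf ul]].
  case: eab => ??; case: e => ??; subst.
  rewrite mem_FL in ai; rewrite -(validF_end ai) ai.
  by rewrite mem_iota in bi.
exists (endp i fw.1), (fw, u); split => //; first by rewrite mem_enum.
by apply/allpairsP; exists (fw, u); rewrite mem_FL vf mem_iota.
Qed.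

Definition ext (e : E) (w : RawWord) : RawFree :=
  match w with
  | inl t0 => ([:: e], (t0, [::]))
  | inr ((p, (t0, us)), u) => (rcons p e, (t0, rcons us u))
  end.

Lemma endp_ext e w : endp i (ext e w).1 = t e.
Proof. by case: w => [t0|[[p [t0 us]] u]] //=; rewrite endp_rcons. Qed.

Lemma K_gt0 : 0 < K.
Proof. by apply/card_gt0P; exists i. Qed.

Lemma validF_ext e w : acyclic s t -> validW w -> endW w = s e -> validF (t e) (ext e w).
Proof.
move=> ac; case: w => [t0|[[p [t0 us]] u]] /=.
  move=> tl ei; rewrite /validF /= tl mem_PL /= K_gt0 ei !eqxx /=.
  by rewrite inE.
case/andP => /and3P[/= pP t0l usl] ul ep.
rewrite /validF /= t0l mem_PL size_rcons /= qpath_rcons eqxx andbT.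
move: pP; rewrite mem_PL => /and3P[p0 pK pq].
have pq' := pq; rewrite ep in pq'.
rewrite pq' (qpath_size ac pq) /=.
case: p p0 pK pq pq' usl ul ep => [//|b p] _ pK pq pq' usl ul ep /=.
by rewrite mem_coordlists all2_rcons -mem_coordlists usl -ep ul.
Qed.

Definition wsize (w : RawWord) := match w with inl _ => 0 | inr (fw, _) => size fw.1 end.

Lemma validW_dec fw u : validW (inr (fw, u)) ->
  exists e w', [/\ validW w', endW w' = s e, fw = ext e w' & wsize w' < size fw.1].
Proof.
case: fw => p [t0 us] /= /andP[/and3P[/= pP t0l usl] ul].
move: pP; rewrite mem_PL => /and3P[p0 pK pq].
case/lastP: p p0 pK pq usl ul => [//|p' e] _ pK pq usl ul.
move: (pq); rewrite qpath_rcons => /andP[pq' _].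
case: p' pK pq usl ul pq' => [|b p''] pK pq usl ul pq'.
  move: usl; rewrite /= => /predU1P [->|//].
  exists e, (inl t0); split => //=.
  by move: pq' => /= /eqP.
set p' := b :: p'' in pK pq usl ul pq' *.
have bh : behead (rcons p' e) = rcons (behead p') e by [].
move: usl; rewrite bh; case/lastP: us => [|us' u'].
  by rewrite mem_coordlists all2_nil_rcons.
rewrite mem_coordlists all2_rcons -mem_coordlists => /andP[usl' ul'].
exists e, (inr ((p', (t0, us')), u')); split => //=; last by rewrite size_rcons.
  rewrite -(qpath_end pq') /validF /= t0l usl' ul' mem_PL pq' /= andbT /=.
  by rewrite !andbT; move: pK; rewrite size_rcons /= => /ltnW.
by rewrite -(qpath_end pq').
Qed.

Lemma validW_endi fw u : acyclic s t -> validW (inr (fw, u)) -> endW (inr (fw, u)) != i.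
Proof.
move=> ac /= /andP[/and3P[]]; rewrite mem_PL => /and3P[p0 _ pq] _ _ _.
apply/eqP => ei; rewrite ei in pq.
by move: p0; rewrite (qpath_nil_acyc ac pq).
Qed.

End Comb.

Local Open Scope ring_scope.

Section EndAlg.
Variables (k : fieldType) (N : vectType k) (Np : (0 < dim N)%N).
Definition EB := lfun_algType Np.
Lemma EmulE (f g : EB) (x : N) : (f * g) x = g (f x).
Proof. by rewrite /GRing.mul /= lfunE. Qed.
Lemma EoneE (x : N) : (1 : EB) x = x.
Proof. by rewrite /GRing.one /= lfunE. Qed.
Lemma EaddE (f g : EB) (x : N) : (f + g) x = f x + g x.
Proof. by rewrite /GRing.add /= lfunE. Qed.
Lemma EzeroE (x : N) : (0 : EB) x = 0.
Proof. by rewrite /GRing.zero /= lfunE. Qed.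
Lemma EsumE (I : Type) (r : seq I) (F : I -> EB) (x : N) :
  (\sum_(j <- r) F j) x = \sum_(j <- r) F j x.
Proof.
elim: r => [|a r IH]; rewrite ?big_nil ?big_cons; first exact: EzeroE.
by rewrite EaddE IH.
Qed.
Lemma EscaleE c (f : EB) (x : N) : (c *: f) x = c *: f x.
Proof. by rewrite /GRing.scale /= lfunE. Qed.
Lemma eqEB (f g : EB) : (forall x, f x = g x) -> f = g.
Proof. by move=> h; apply/lfunP. Qed.
End EndAlg.

Lemma dim_gt0 (k : fieldType) (W : vectType k) (v : W) : v != 0 -> (0 < dim W)%N.
Proof.
move=> v0; rewrite -dimvf lt0n dimv_eq0; apply/eqP => h.
by move: (memvf v); rewrite h memv0 (negbTE v0).
Qed.

Section Basis.
Variables (k : fieldType) (W : vectType k).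
Definition bd := \dim {:W}.
Definition bv (u : nat) : W := (vbasis {:W})`_u.
Definition cf (u : 'I_bd) (x : W) : k := coord (vbasis {:W}) u x.
Lemma expand x : x = \sum_(u < bd) cf u x *: bv u.
Proof. exact: coord_vbasis (memvf x). Qed.
Lemma cf_bv (u u' : 'I_bd) : cf u' (bv u) = (u == u')%:R.
Proof. by rewrite /cf /bv coord_free // (basis_free (vbasisP _)). Qed.
Lemma cfD u x y : cf u (x + y) = cf u x + cf u y.
Proof. exact: linearD. Qed.
Lemma cfZ u c x : cf u (c *: x) = c * cf u x.
Proof. exact: linearZ. Qed.
Lemma cf0 u : cf u 0 = 0.
Proof. exact: linear0. Qed.
Lemma cf_sum u (I : Type) (r : seq I) (F : I -> W) : cf u (\sum_(j <- r) F j) = \sum_(j <- r) cf u (F j).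
Proof. exact: linear_sum. Qed.
Lemma cf_expand (c : 'I_bd -> k) u : cf u (\sum_(u' < bd) c u' *: bv u') = c u.
Proof.
rewrite cf_sum (bigD1 u) //= big1 ?addr0 => [|u' ne]; rewrite cfZ cf_bv ?eqxx ?mulr1 //.
by rewrite (negbTE ne) mulr0.
Qed.
Lemma coords_eq0 x : (forall u, cf u x = 0) -> x = 0.
Proof. by move=> h; rewrite (expand x) big1 // => u _; rewrite h scale0r. Qed.
End Basis.

Section LinMap.
Variables (k : fieldType) (U W : lmodType k) (f : U -> W) (fl : lin_map f).
Lemma lin0 : f 0 = 0.
Proof. by have := fl 1 0 0; rewrite !scale1r addr0 => h; apply: (addrI (f 0)); rewrite addr0 -h. Qed.
Lemma linD x y : f (x + y) = f x + f y.
Proof. by have := fl 1 x y; rewrite !scale1r. Qed.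
Lemma linZ c x : f (c *: x) = c *: f x.
Proof. by have := fl c x 0; rewrite !addr0 lin0 addr0. Qed.
Lemma lin_sum (I : Type) (r : seq I) (F : I -> U) : f (\sum_(j <- r) F j) = \sum_(j <- r) f (F j).
Proof. by elim: r => [|a r IH]; rewrite ?big_nil ?big_cons ?lin0 // linD IH. Qed.
End LinMap.

Section Ract.
Variables (k : fieldType) (R : algType k) (Mo : rmod R).
Lemma ract_linl' r : lin_map (fun x : Mo => ract x r).
Proof. by move=> c x y; rewrite ract_linl. Qed.
Lemma ract_sum r (I : Type) (rr : seq I) (F : I -> Mo) :
  ract (\sum_(j <- rr) F j) r = \sum_(j <- rr) ract (F j) r.
Proof. exact: (lin_sum (ract_linl' r)). Qed.
Lemma ract_scale r c (x : Mo) : ract (c *: x) r = c *: ract x r.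
Proof. exact: (linZ (ract_linl' r)). Qed.
Lemma ract0 r : ract (0 : Mo) r = 0.
Proof. exact: (lin0 (ract_linl' r)). Qed.
Lemma ract_linr' (x : Mo) : lin_map (fun r : R => ract x r).
Proof. by move=> c r r'; rewrite ract_linr. Qed.
Lemma ract_sumr (x : Mo) (I : Type) (rr : seq I) (F : I -> R) :
  ract x (\sum_(j <- rr) F j) = \sum_(j <- rr) ract x (F j).
Proof. exact: (lin_sum (ract_linr' x)). Qed.
Lemma ract_scaler (x : Mo) c r : ract x (c *: r) = c *: ract x r.
Proof. exact: (linZ (ract_linr' x)). Qed.
Lemma ract0r (x : Mo) : ract x 0 = 0.
Proof. exact: (lin0 (ract_linr' x)). Qed.
Lemma ractDr (x : Mo) r r' : ract x (r + r') = ract x r + ract x r'.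
Proof. exact: (linD (ract_linr' x)). Qed.
Lemma ractNl (x : Mo) r : ract (- x) r = - ract x r.
Proof. by rewrite -scaleN1r ract_scale scaleN1r. Qed.
Lemma ractDl (x y : Mo) r : ract (x + y) r = ract x r + ract y r.
Proof. exact: (linD (ract_linl' r)). Qed.
End Ract.

Section Model.
Variables (k : fieldType) (V E : finType) (s t : E -> V) (A : V -> falgType k)
  (i : V) (M : rmod (A i)).
Hypothesis ac : acyclic s t.

Local Notation dM := (bd M).
Local Notation dA v := (bd (A v)).
Local Notation WL := (WL s t i dM (fun v => dA v)).
Local Notation validW := (validW s t i dM (fun v => dA v)).
Local Notation validF := (validF s t i dM (fun v => dA v)).
Local Notation endW := (endW t i).
Local Notation endp := (endp t).
Local Notation RawWord := (RawWord E).

Lemma validW_WL w : (w \in WL) = validW w.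
Proof. exact: mem_WL. Qed.

Definition Idx := seq_sub WL.
Definition N := {ffun Idx -> k^o}.

Definition rb (w : RawWord) : N := [ffun y : Idx => ((ssval y == w)%:R : k^o)].

Lemma NscaleE c (f : N) y : (c *: f) y = c * f y.
Proof. exact: (ffunE _ y). Qed.
Lemma NaddE (f g : N) y : (f + g) y = f y + g y.
Proof. exact: (ffunE _ y). Qed.
Lemma NzeroE y : (0 : N) y = 0.
Proof. exact: (ffunE _ y). Qed.

Lemma rbE w (y : Idx) : rb w y = (ssval y == w)%:R.
Proof. by rewrite ffunE. Qed.

Lemma rb_notin w : ~~ validW w -> rb w = 0.
Proof.
move=> nv; apply/ffunP => y; rewrite !ffunE.
case: eqP => // e; move: (ssvalP y); rewrite e validW_WL => h.
by rewrite h in nv.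
Qed.

Lemma N_expand (phi : N) : phi = \sum_(y : Idx) phi y *: rb (ssval y).
Proof.
apply/ffunP => y0; rewrite sum_ffunE (bigD1 y0) //= big1 ?addr0.
  by rewrite NscaleE rbE eqxx mulr1.
move=> y ne; rewrite NscaleE rbE; case: eqP => [e|]; last by rewrite mulr0.
by move: ne; rewrite (val_inj e) eqxx.
Qed.

Definition mkEf (F : RawWord -> N) (phi : N) : N := \sum_(y : Idx) phi y *: F (ssval y).

Fact mkEf_lin F : linear (mkEf F).
Proof.
move=> c x y; rewrite /mkEf scaler_sumr -big_split /=; apply: eq_bigr => z _.
by rewrite NaddE NscaleE scalerDl scalerA.
Qed.

HB.instance Definition _ F := GRing.isSemilinear.Build k N N _ (mkEf F)
  (GRing.semilinear_linear (mkEf_lin F)).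

Definition mkE F : 'End(N) := linfun (mkEf F).

Lemma mkEE F phi : mkE F phi = \sum_(y : Idx) phi y *: F (ssval y).
Proof. by rewrite lfunE. Qed.

Lemma mkE_rb F w : validW w -> mkE F (rb w) = F w.
Proof.
move=> vw; have wi : w \in WL by rewrite validW_WL.
rewrite mkEE (bigD1 (SeqSub wi)) //= big1 ?addr0 ?rbE /= ?eqxx ?scale1r //.
move=> y ne; rewrite rbE; case: eqP => [e|]; last by rewrite scale0r.
by move: ne; rewrite -(inj_eq val_inj) /= e eqxx.
Qed.

Lemma lin_ext_rb (W : lmodType k) (f g : N -> W) : lin_map f -> lin_map g ->
  (forall w, validW w -> f (rb w) = g (rb w)) -> forall phi, f phi = g phi.
Proof.
move=> fl gl h phi; rewrite (N_expand phi) (lin_sum fl) (lin_sum gl).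
apply: eq_bigr => y _; rewrite (linZ fl) (linZ gl) h //.
by rewrite -validW_WL (ssvalP y).
Qed.

Lemma lfun_lin (f : 'End(N)) : lin_map f.
Proof. by move=> c x y; rewrite linearP. Qed.

Lemma lfun_ext_rb (f g : 'End(N)) :
  (forall w, validW w -> f (rb w) = g (rb w)) -> f = g.
Proof. by move=> h; apply/lfunP => phi; apply: (lin_ext_rb (lfun_lin f) (lfun_lin g) h). Qed.

Definition castA v (a : A v) : A i :=
  match v =P i with ReflectT e => eq_rect v A a i e | ReflectF _ => 0 end.

Lemma castA_id (a : A i) : castA a = a.
Proof. by rewrite /castA; case: eqP => // e; rewrite (eq_axiomK e). Qed.

Definition iM (m : M) : N := \sum_(t0 < dM) cf t0 m *: rb (inl (t0 : nat)).

Lemma iM_lin : lin_map iM.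
Proof.
move=> c x y; rewrite /iM scaler_sumr -big_split; apply: eq_bigr => u _ /=.
by rewrite cfD cfZ scalerDl scalerA.
Qed.

Lemma iM_bv (t0 : 'I_dM) : iM (bv M t0) = rb (inl (t0 : nat)).
Proof.
rewrite /iM (bigD1 t0) //= big1 ?addr0 ?cf_bv ?eqxx ?scale1r // => u ne.
by rewrite cf_bv eq_sym (negbTE ne) scale0r.
Qed.

Definition nv v (fw : RawFree E) (x : A v) : N :=
  \sum_(u < dA v) cf u x *: rb (inr (fw, (u : nat))).

Lemma nv_lin v fw : lin_map (@nv v fw).
Proof.
move=> c x y; rewrite /nv scaler_sumr -big_split; apply: eq_bigr => u _ /=.
by rewrite cfD cfZ scalerDl scalerA.
Qed.

Lemma nv_bv v fw (u : 'I_(dA v)) : nv fw (bv (A v) u) = rb (inr (fw, (u : nat))).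
Proof.
rewrite /nv (bigD1 u) //= big1 ?addr0 ?cf_bv ?eqxx ?scale1r // => u' ne.
by rewrite cf_bv eq_sym (negbTE ne) scale0r.
Qed.

Definition imgA v (a : A v) (w : RawWord) : N :=
  match w with
  | inl t0 => if v == i then iM (ract (bv M t0) (castA a)) else 0
  | inr (fw, u) => if endp i fw.1 == v then nv fw (bv (A v) u * a) else 0
  end.

Definition fA v (a : A v) : 'End(N) := mkE (imgA a).

Definition imgE (e : E) (w : RawWord) : N :=
  if endW w == s e then nv (ext e w) (1 : A (t e)) else 0.

Definition bE e : 'End(N) := mkE (imgE e).

Lemma fA_rb v (a : A v) w : validW w -> fA a (rb w) = imgA a w.
Proof. exact: mkE_rb. Qed.

Lemma bE_rb e w : validW w -> bE e (rb w) = imgE e w.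
Proof. exact: mkE_rb. Qed.

Lemma fA_iM (a : A i) m : fA a (iM m) = iM (ract m a).
Proof.
rewrite {1}/iM linear_sum {2}(expand m) (ract_sum) (lin_sum iM_lin).
apply: eq_bigr => t0 _ /=; rewrite (linZ (lfun_lin _)) fA_rb /= ?eqxx ?castA_id ?ract_scale ?(linZ iM_lin) //.
Qed.

Lemma fA_iM_ne v (a : A v) m : v != i -> fA a (iM m) = 0.
Proof.
move=> vi; rewrite /iM (lin_sum (lfun_lin _)) big1 // => t0 _.
by rewrite (linZ (lfun_lin _)) fA_rb /= ?(negbTE vi) ?scaler0.
Qed.

Lemma validW_inr v fw (u : 'I_(dA v)) : validF v fw -> validW (inr (fw, (u : nat))).
Proof. by move=> vf; rewrite /= -(validF_end vf) vf ltn_ord. Qed.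

Lemma fA_nv v fw (x a : A v) : validF v fw -> fA a (nv fw x) = nv fw (x * a).
Proof.
move=> vf; rewrite /nv (lin_sum (lfun_lin _)).
transitivity (nv fw ((\sum_(u < dA v) cf u x *: bv (A v) u) * a)); last by rewrite -expand.
rewrite mulr_suml (lin_sum (@nv_lin v fw)); apply: eq_bigr => u _.
rewrite (linZ (lfun_lin _)) fA_rb ?(validW_inr u vf) //= -(validF_end vf) eqxx.
by rewrite -scalerAl (linZ (@nv_lin v fw)).
Qed.

Lemma fA_nv_ne v v' fw (x : A v) (a : A v') : endp i fw.1 != v' -> fA a (nv fw x) = 0.
Proof.
move=> ne; rewrite /nv (lin_sum (lfun_lin _)) big1 // => u _.
rewrite (linZ (lfun_lin _)); case vw: (validW (inr (fw, (u : nat)))).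
  by rewrite fA_rb //= (negbTE ne) scaler0.
by rewrite rb_notin ?vw // linear0 scaler0.
Qed.

Lemma imgA_1 v w : validW w -> imgA (1 : A v) w = if endW w == v then rb w else 0.
Proof.
case: w => [t0|[fw u]] /= vw.
  rewrite eq_sym; case: eqP => // e; subst v.
  by rewrite castA_id ract1 (iM_bv (Ordinal vw)).
case: eqP => // e; subst v; rewrite mulr1.
by case/andP: vw => _ ul; rewrite (nv_bv _ (Ordinal ul)).
Qed.

Lemma imgA_lin v w : lin_map (fun a : A v => imgA a w).
Proof.
move=> c x y; case: w => [t0|[fw u]] /=.
  case: eqP => [e|_]; last by rewrite scaler0 addr0.
  subst v; rewrite !castA_id ract_linr (linD iM_lin) (linZ iM_lin) //.
case: eqP => [e|_]; last by rewrite scaler0 addr0.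
by rewrite mulrDr -scalerAr (linD (@nv_lin _ _)) (linZ (@nv_lin _ _)).
Qed.

Variable Np : (0 < dim N)%N.
Local Notation B := (EB Np).

Lemma gpa_model : gpa_data s t (fun v (a : A v) => (fA a : B)) (fun e => (bE e : B)).
Proof.
split; [|split; [|split; [|split]]].
- move=> v c x y; apply: lfun_ext_rb => w vw.
  rewrite EaddE EscaleE !fA_rb //; exact: imgA_lin.
- move=> v x y; apply: lfun_ext_rb => w vw.
  rewrite EmulE !fA_rb //; case: w vw => [t0|[fw u]] /= vw.
    case: eqP => [e|_]; last by rewrite linear0.
    by subst v; rewrite !castA_id fA_iM ractM.
  case: eqP => [e|_]; last by rewrite linear0.
  by subst v; rewrite fA_nv ?mulrA //; case/andP: vw.
- apply: lfun_ext_rb => w vw; rewrite EsumE EoneE.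
  rewrite (bigD1 (endW w)) //= big1 ?addr0 ?fA_rb ?imgA_1 ?eqxx // => v ne.
  by rewrite fA_rb // imgA_1 // eq_sym (negbTE ne).
- move=> v w vw x y; apply: lfun_ext_rb => w' vw'.
  rewrite EmulE EzeroE fA_rb //; case: w' vw' => [t0|[fw u]] /= vw'.
    case: eqP => [e|_]; last by rewrite linear0.
    subst v; by rewrite fA_iM_ne // eq_sym.
  case: eqP => [e|_]; last by rewrite linear0.
  by rewrite fA_nv_ne // e.
- move=> e; apply: lfun_ext_rb => w vw.
  rewrite !EmulE fA_rb // imgA_1 //; case: eqP => [ew|ne]; last first.
    by rewrite !linear0 bE_rb // /imgE; case: eqP.
  rewrite bE_rb // /imgE ew eqxx fA_nv ?mulr1 //.
  have := validF_ext ac vw ew.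
  by [].
Qed.

End Model.

Unset Implicit Arguments.

Section GpaFacts.
Context {k : fieldType} {V E : finType} {s t : E -> V} {A : V -> falgType k}
  {L : algType k} {emb : forall v, A v -> L} {arr : E -> L}.
Hypothesis gd : gpa_data s t emb arr.

Lemma emb_lin v : lin_map (emb v). Proof. by case: gd. Qed.
Lemma embM v (x y : A v) : emb v (x * y) = emb v x * emb v y.
Proof. by case: gd => _ []. Qed.
Lemma emb_sum1 : \sum_v emb v 1 = 1.
Proof. by case: gd => _ [_ []]. Qed.
Lemma emb_orth v w (x : A v) (y : A w) : v != w -> emb v x * emb w y = 0.
Proof. by case: gd => _ [_ [_ [h _]]] /h; apply. Qed.
Lemma arr_idem e : emb (s e) 1 * arr e * emb (t e) 1 = arr e.
Proof. by case: gd => _ [_ [_ [_ h]]]. Qed.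
Lemma emb0 v : emb v 0 = 0. Proof. exact: (lin0 (emb_lin v)). Qed.
Lemma arr_r e : arr e * emb (t e) 1 = arr e.
Proof. by rewrite -{1}arr_idem -mulrA -embM mulr1 arr_idem. Qed.
Lemma arr_l e : emb (s e) 1 * arr e = arr e.
Proof. by rewrite -{1}arr_idem !mulrA -embM mulr1 arr_idem. Qed.
Lemma emb_arr_ne v (x : A v) e : v != s e -> emb v x * arr e = 0.
Proof. by move=> ne; rewrite -arr_l mulrA emb_orth // mul0r. Qed.

Lemma gpa_comp (B B' : algType k) (f : forall v, A v -> B) (b : E -> B) (G : B -> B') :
  alg_hom G -> gpa_data s t f b -> gpa_data s t (fun v x => G (f v x)) (fun e => G (b e)).
Proof.
move=> [Gl [GM G1]] [fl [fM [f1 [fo fa]]]].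
split; [|split; [|split; [|split]]].
- by move=> v c x y; rewrite fl (linD Gl) (linZ Gl).
- by move=> v x y; rewrite fM GM.
- by rewrite -(lin_sum Gl) f1 G1.
- by move=> v w vw x y; rewrite -GM fo // (lin0 Gl).
- by move=> e; rewrite -!GM fa.
Qed.
End GpaFacts.

Section Main1.
Variables (k : fieldType) (V E : finType) (s t : E -> V) (A : V -> falgType k)
  (L : falgType k) (emb : forall v, A v -> L) (arr : E -> L)
  (i : V) (M : rmod (A i)) (X : rmod L) (tau : M -> L -> X).
Hypothesis ac : acyclic s t.
Hypothesis gpa : is_gpa s t emb arr.
Hypothesis cone : is_cone emb tau.

Local Notation dM := (bd M).
Local Notation dA v := (bd (A v)).
Local Notation validW := (validW s t i dM (fun v => dA v)).
Local Notation validF := (validF s t i dM (fun v => dA v)).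
Local Notation endW := (endW t i).
Local Notation endp := (endp t).
Local Notation RawWord := (RawWord E).
Local Notation N := (N s t M).
Local Notation rb := (rb s t M).
Local Notation fA := (fA s t M).
Local Notation bE := (bE s t M).
Local Notation nv := (nv s t M).
Local Notation iM := (@iM _ _ _ s t _ _ M).
Local Notation Idx := (Idx s t M).

Let gd : gpa_data s t emb arr := gpa.1.

Lemma tau_linl l : lin_map (fun m => tau m l).
Proof. by case: cone => [[h _] _] c x y; apply: h. Qed.
Lemma tau_linr m : lin_map (tau m).
Proof. by case: cone => [[_ h] _] c x y; apply: h. Qed.
Lemma bal1 a m l : tau (ract m a) l = tau m (emb i a * l).
Proof. by case: cone => _ [[h _] _]; apply: h. Qed.
Lemma bal2 w a m l : w != i -> tau m (emb w a * l) = 0.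
Proof. by case: cone => _ [[_ h] _] wi; apply: h. Qed.
Lemma tauM m l l' : tau m (l * l') = ract (tau m l) l'.
Proof. by case: cone => _ [_ [h _]]. Qed.
Lemma X_ext (W : lmodType k) (h1 h2 : X -> W) : lin_map h1 -> lin_map h2 ->
  (forall m l, h1 (tau m l) = h2 (tau m l)) -> h1 =1 h2.
Proof.
case: cone => _ [_ [_ h]] l1 l2 e.
have [||_ U] := h W (fun _ _ => 0); last exact: U.
  by split => * /=; rewrite scaler0 addr0.
by split.
Qed.
Lemma tau0r m : tau m 0 = 0. Proof. exact: (lin0 (tau_linr m)). Qed.

Lemma tau_ei m l : tau m l = tau m (emb i 1 * l).
Proof.
rewrite -{1}[l]mul1r -(emb_sum1 gd) mulr_suml (lin_sum (tau_linr m)).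
rewrite (bigD1 i) //= big1 ?addr0 // => v vi; exact: bal2.
Qed.

Fixpoint wl' (q : seq E) (us : seq nat) : L :=
  if q is b :: q' then emb (s b) (bv (A (s b)) (head 0%N us)) * arr b * wl' q' (behead us)
  else 1.

Definition wordL (p : seq E) (us : seq nat) : L :=
  if p is b :: q then emb i 1 * arr b * wl' q us else emb i 1.

Definition Word (w : RawWord) : L :=
  match w with
  | inl _ => emb i 1
  | inr (fw, u) => wordL fw.1 fw.2.2 * emb (endp i fw.1) (bv (A (endp i fw.1)) u)
  end.

Definition t0W (w : RawWord) : nat := match w with inl t0 => t0 | inr (fw, _) => fw.2.1 end.

Definition Gw (w : RawWord) : X := tau (bv M (t0W w)) (Word w).

Definition g (phi : N) : X := \sum_(y : Idx) phi y *: Gw (ssval y).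

Lemma g_lin : lin_map g.
Proof.
move=> c x y; rewrite /g scaler_sumr -big_split /=; apply: eq_bigr => z _.
by rewrite NaddE NscaleE scalerDl scalerA.
Qed.

Lemma g_rb w : validW w -> g (rb w) = Gw w.
Proof.
move=> vw; have wi : w \in WL s t i dM (fun v => dA v) by rewrite mem_WL.
rewrite /g (bigD1 (SeqSub wi)) //= big1 ?addr0 ?rbE /= ?eqxx ?scale1r //.
move=> y ne; rewrite rbE; case: eqP => [e|]; last by rewrite scale0r.
by move: ne; rewrite -(inj_eq val_inj) /= e eqxx.
Qed.

Lemma g_iM m : g (iM m) = tau m (emb i 1).
Proof.
rewrite /iM (lin_sum g_lin) {2}(expand m) (lin_sum (tau_linl _)).
apply: eq_bigr => t0 _; rewrite (linZ g_lin) g_rb; last exact: ltn_ord.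
by rewrite (linZ (tau_linl _)).
Qed.

Lemma g_nv v fw (x : A v) : validF v fw ->
  g (nv fw x) = tau (bv M fw.2.1) (wordL fw.1 fw.2.2 * emb v x).
Proof.
move=> vf; have ev := validF_end vf; subst v.
rewrite /nv (lin_sum g_lin) {2}(expand x) (lin_sum (emb_lin gd _)) mulr_sumr.
rewrite (lin_sum (tau_linr _)); apply: eq_bigr => u _.
rewrite (linZ g_lin) g_rb ?(validW_inr u vf) // (linZ (emb_lin gd _)).
by rewrite -scalerAr (linZ (tau_linr _)).
Qed.

Lemma all2_size {T1 T2 : Type} {r : T1 -> T2 -> bool} {xs ys} : all2 r xs ys -> size xs = size ys.
Proof. by elim: xs ys => [|x xs IH] [|y ys] //= /andP[_ /IH ->]. Qed.

Lemma wl'_rcons q us e u : size us = size q ->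
  wl' (rcons q e) (rcons us u) = wl' q us * emb (s e) (bv (A (s e)) u) * arr e.
Proof.
elim: q us => [|b q IH] [|u' us] //= => [_|[/IH ->]].
  by rewrite mulr1 mul1r.
by rewrite !mulrA.
Qed.

Lemma Word_end w : exists Z (z : A (endW w)), Word w = Z * emb (endW w) z.
Proof.
case: w => [t0|[fw u]] /=; first by exists 1, 1; rewrite mul1r.
by exists (wordL fw.1 fw.2.2), (bv (A (endp i fw.1)) u).
Qed.

Lemma wordL_ext e w : validW w -> endW w = s e ->
  wordL (ext e w).1 (ext e w).2.2 = Word w * arr e.
Proof.
case: w => [t0|[[p [t0 us]] u]] /=; first by rewrite mulr1.
case/andP => /and3P[/= pP _ usl] _ ew.
move: pP; rewrite mem_PL; case: p ew usl => [|b q] ew usl /and3P[//= _ _ _].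
rewrite mem_coordlists in usl.
have sz := all2_size usl.
rewrite /= wl'_rcons // !mulrA.
by move: ew; rewrite /endp /= => ->.
Qed.

Lemma t0W_ext e w : (ext e w).2.1 = t0W w.
Proof. by case: w => [t0|[[p [t0 us]] u]]. Qed.

Lemma compat_emb v (a : A v) phi : g (fA a phi) = ract (g phi) (emb v a).
Proof.
apply: (lin_ext_rb (f := fun phi => g (fA a phi)) (g := fun phi => ract (g phi) (emb v a))).
- by move=> c x y; rewrite linearP /= g_lin.
- by move=> c x y; rewrite g_lin ract_linl.
move=> w vw; rewrite fA_rb // g_rb // /Gw.
case: w vw => [t0|[fw u]] vw /=.
  case: eqP => [e|ne].
    subst v; rewrite castA_id g_iM bal1 -tauM -!(embM gd) mulr1 mul1r //.
  by rewrite (lin0 g_lin) -tauM (emb_orth gd) ?tau0r //; apply/eqP => e; apply: ne; rewrite e.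
case/andP: vw => vf _.
case: eqP => [e|ne].
  by subst v; rewrite g_nv // -tauM -mulrA -(embM gd).
by rewrite (lin0 g_lin) -tauM -mulrA (emb_orth gd) ?mulr0 ?tau0r //; apply/eqP.
Qed.

Lemma compat_arr e phi : g (bE e phi) = ract (g phi) (arr e).
Proof.
apply: (lin_ext_rb (f := fun phi => g (bE e phi)) (g := fun phi => ract (g phi) (arr e))).
- by move=> c x y; rewrite linearP /= g_lin.
- by move=> c x y; rewrite g_lin ract_linl.
move=> w vw; rewrite bE_rb // g_rb // /Gw /imgE.
case: eqP => [ew|ne].
  rewrite g_nv; last exact: validF_ext.
  by rewrite -tauM wordL_ext // -mulrA (arr_r gd) t0W_ext.
have [Z [z ->]] := Word_end w.
by rewrite (lin0 g_lin) -tauM -mulrA (emb_arr_ne gd) ?mulr0 ?tau0r //; apply/eqP.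
Qed.

Lemma grp1 (W : lmodType k) c (a a' b b' d d' : W) :
  (c*:a + a') + ((c*:b + b') - (c*:d + d')) = c *: (a + (b - d)) + (a' + (b' - d')).
Proof.
rewrite !scalerDr scalerN opprD [c *: b + b' + _]addrACA.
by rewrite [LHS]addrACA.
Qed.
Lemma grp2 (W : zmodType) (a b c d : W) : a + (b - c) + (d - b) = a + (d - c).
Proof. rewrite -addrA; congr (_ + _). by rewrite addrC addrA addrNK. Qed.

Hypothesis dMpos : (0 < dM)%N.

Lemma rb0_neq0 : rb (inl 0%N) != 0.
Proof.
have wi : (inl 0%N : RawWord) \in WL s t i dM (fun v => dA v) by rewrite mem_WL.
apply/eqP => /ffunP /(_ (SeqSub wi)); rewrite rbE NzeroE eqxx => /eqP.
by rewrite oner_eq0.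
Qed.

Lemma Np_proof : (0 < dim N)%N.
Proof. exact: (@dim_gt0 _ _ (rb (inl 0%N)) rb0_neq0). Qed.

Local Notation Np := Np_proof.
Local Notation EBN := (EB Np).

Variables (rho : L -> EBN) (rhoH : alg_hom rho)
  (rho_emb : forall v x, rho (emb v x) = fA x) (rho_arr : forall e, rho (arr e) = bE e).

Lemma rho_lin l : lin_map (fun phi : N => (rho l : 'End(N)) phi).
Proof. exact: lfun_lin. Qed.

Lemma rhoD c l l' phi : (rho (c *: l + l') : 'End(N)) phi = c *: rho l phi + rho l' phi.
Proof. by case: rhoH => -> _; rewrite EaddE EscaleE. Qed.

Lemma rhoM l l' phi : (rho (l * l') : 'End(N)) phi = rho l' (rho l phi).
Proof. by case: rhoH => _ [-> _]; rewrite EmulE. Qed.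

Lemma rho1 phi : (rho 1 : 'End(N)) phi = phi.
Proof. by case: rhoH => _ [_ ->]; rewrite EoneE. Qed.

Definition PX := (N * X)%type.

Lemma Np2 : (0 < dim PX)%N.
Proof.
apply: (@dim_gt0 _ _ ((rb (inl 0%N), 0) : PX)).
by apply: contra rb0_neq0 => /eqP [->].
Qed.

Definition P1 l (z : PX) : PX := ((rho l : 'End(N)) z.1, ract z.2 l).
Definition P2 l (z : PX) : PX :=
  ((rho l : 'End(N)) z.1, ract z.2 l + (g ((rho l : 'End(N)) z.1) - ract (g z.1) l)).

Fact P1_lin l : linear (P1 l).
Proof.
move=> c [x1 x2] [y1 y2]; rewrite /P1 /=.
by rewrite (linD (rho_lin l)) (linZ (rho_lin l)) ract_linl.
Qed.
Fact P2_lin l : linear (P2 l).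
Proof.
move=> c [x1 x2] [y1 y2]; rewrite /P2 /=.
apply: injective_projections => /=; first exact: rho_lin.
by rewrite ract_linl (rho_lin l c x1 y1) !g_lin ract_linl grp1.
Qed.

HB.instance Definition _ l := GRing.isSemilinear.Build k PX PX _ (P1 l)
  (GRing.semilinear_linear (P1_lin l)).
HB.instance Definition _ l := GRing.isSemilinear.Build k PX PX _ (P2 l)
  (GRing.semilinear_linear (P2_lin l)).

Local Notation EB2 := (EB Np2).

Definition Q1 l : EB2 := linfun (P1 l).
Definition Q2 l : EB2 := linfun (P2 l).

Lemma Q1_hom : alg_hom Q1.
Proof.
split; [|split].
- move=> c l l'; apply: eqEB => -[x1 x2]; rewrite EaddE EscaleE !lfunE; unfold P1; simpl.
  by apply: injective_projections => /=; [exact: rhoD|exact: ract_linr].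
- move=> l l'; apply: eqEB => -[x1 x2]; rewrite EmulE !lfunE; unfold P1; simpl.
  by apply: injective_projections => /=; [exact: rhoM|by rewrite ractM].
- apply: eqEB => -[x1 x2]; rewrite EoneE !lfunE; unfold P1; simpl.
  by apply: injective_projections => /=; [exact: rho1|exact: ract1].
Qed.

Lemma Q2_hom : alg_hom Q2.
Proof.
split; [|split].
- move=> c l l'; apply: eqEB => -[x1 x2]; rewrite EaddE EscaleE !lfunE; unfold P2; simpl.
  apply: injective_projections => /=; first exact: rhoD.
  by rewrite !rhoD ract_linr g_lin !ract_linr grp1.
- move=> l l'; apply: eqEB => -[x1 x2]; rewrite EmulE !lfunE; unfold P2; simpl.
  apply: injective_projections => /=; first exact: rhoM.
  by rewrite rhoM -!ractM ractDl ractDl ractNl grp2.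
- apply: eqEB => -[x1 x2]; rewrite EoneE !lfunE; unfold P2; simpl.
  apply: injective_projections => /=; first exact: rho1.
  by rewrite rho1 !ract1 subrr addr0.
Qed.

Lemma Q12_emb v (a : A v) : Q1 (emb v a) = Q2 (emb v a).
Proof.
apply: eqEB => -[x1 x2]; rewrite !lfunE; unfold P1, P2; simpl.
apply: injective_projections => //=.
by rewrite rho_emb compat_emb subrr addr0.
Qed.

Lemma Q12_arr e : Q1 (arr e) = Q2 (arr e).
Proof.
apply: eqEB => -[x1 x2]; rewrite !lfunE; unfold P1, P2; simpl.
apply: injective_projections => //=.
by rewrite rho_arr compat_arr subrr addr0.
Qed.

Lemma compat l phi : g ((rho l : 'End(N)) phi) = ract (g phi) l.
Proof.
have gd2 := gpa_comp _ _ _ _ _ Q1_hom gd.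
have [_ U] := gpa.2 EB2 _ _ gd2.
have := U Q1 Q2 Q1_hom Q2_hom Q12_emb Q12_arr l.
move/(congr1 (fun f : EB2 => (f : 'End(PX)) (phi, 0))).
rewrite !lfunE; unfold P1, P2; simpl => -[] /eqP.
by rewrite -subr_eq0 opprD addrA subrr add0r oppr_eq0 subr_eq0 => /eqP.
Qed.

Definition sigma (m : M) (l : L) : N := (rho l : 'End(N)) (iM m).

Lemma sigma_bilin : bilin sigma.
Proof.
split => [r c x y|x c r r']; rewrite /sigma.
  by rewrite iM_lin (rho_lin r).
by rewrite rhoD.
Qed.

Lemma sigma_bal : balanced emb sigma.
Proof.
split => [a m l|w wi a m l]; rewrite /sigma rhoM rho_emb.
  by rewrite fA_iM.
by rewrite fA_iM_ne // (lin0 (rho_lin l)).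
Qed.

Variables (h : X -> N) (hlin : lin_map h) (htau : forall m l, h (tau m l) = sigma m l).

Lemma h_ract y l : h (ract y l) = (rho l : 'End(N)) (h y).
Proof.
apply: (@X_ext N (fun y => h (ract y l)) (fun y => (rho l : 'End(N)) (h y))).
- by move=> c x z; rewrite ract_linl hlin.
- by move=> c x z; rewrite hlin (rho_lin l).
by move=> m l'; rewrite -tauM !htau /sigma rhoM.
Qed.

Lemma gh y : g (h y) = y.
Proof.
apply: (@X_ext X (fun y => g (h y)) id) => //.
- by move=> c x z; rewrite hlin g_lin.
by move=> m l; rewrite htau /sigma compat g_iM -tauM -tau_ei.
Qed.

Lemma rho_Word w : validW w -> (rho (Word w) : 'End(N)) (iM (bv M (t0W w))) = rb w.
Proof.
move: {2}(wsize w).+1 (ltnSn (wsize w)) => n; elim: n w => [//|n IH] w.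
case: w => [t0|[fw u]] ltn vw /=.
  by rewrite rho_emb fA_iM ract1 (iM_bv _ _ (Ordinal vw)).
have [e [w' [vw' ew' efw lt']]] := validW_dec vw; subst fw.
have ul : (u < dA (t e))%N.
  by case/andP: vw => _; rewrite endp_ext.
move: vw; rewrite /= endp_ext => vw.
rewrite wordL_ext // t0W_ext !rhoM (IH w') ?(leq_trans lt') //.
rewrite rho_arr rho_emb bE_rb // /imgE ew' eqxx fA_nv ?mul1r; last exact: validF_ext.
by rewrite (nv_bv s t M (ext e w') (Ordinal ul)).
Qed.

Lemma hG w : validW w -> h (Gw w) = rb w.
Proof. by move=> vw; rewrite /Gw htau /sigma rho_Word. Qed.

Lemma hg phi : h (g phi) = phi.
Proof.
apply: (lin_ext_rb (f := fun phi => h (g phi)) (g := id)) => //.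
- by move=> c x z; rewrite g_lin hlin.
by move=> w vw; rewrite g_rb // hG.
Qed.

Lemma Idx_valid (y : Idx) : validW (ssval y).
Proof. by rewrite -mem_WL (ssvalP y). Qed.

Lemma fA1_at v psi (y0 : Idx) :
  (fA (1 : A v) psi) y0 = if endW (ssval y0) == v then psi y0 else 0.
Proof.
rewrite /fA mkEE sum_ffunE (bigD1 y0) //= big1 ?addr0.
  rewrite NscaleE imgA_1 ?Idx_valid //; case: eqP => _.
    by rewrite rbE eqxx mulr1.
  by rewrite NzeroE mulr0.
move=> y ne; rewrite NscaleE imgA_1 ?Idx_valid //; case: eqP => _; last by rewrite NzeroE mulr0.
by rewrite rbE (inj_eq val_inj) eq_sym (negbTE ne) mulr0.
Qed.

Definition coefN (psi : N) (w : RawWord) : k := if insub w is Some y then psi y else 0.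

Lemma coefN_val psi (y : Idx) : coefN psi (ssval y) = psi y.
Proof. by rewrite /coefN valK. Qed.

Lemma iM_at (m : M) (y0 : Idx) :
  (iM m) y0 = \sum_(u < dM) cf u m * ((ssval y0 == inl (u : nat))%:R).
Proof. by rewrite sum_ffunE; apply: eq_bigr => u _; rewrite NscaleE rbE. Qed.

Lemma nv_at v fw (x : A v) (y0 : Idx) :
  (nv fw x) y0 = \sum_(u < dA v) cf u x * ((ssval y0 == inr (fw, (u : nat)))%:R).
Proof. by rewrite sum_ffunE; apply: eq_bigr => u _; rewrite NscaleE rbE. Qed.

Lemma inl_eqE (a b : nat) : (inl a == inl b :> RawWord) = (a == b).
Proof. by apply/eqP/eqP => [[]|->]. Qed.
Lemma inr_eqE a b : (inr a == inr b :> RawWord) = (a == b).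
Proof. by apply/eqP/eqP => [[]|->]. Qed.

Lemma sum_delta (n : nat) (F : 'I_n -> k) (u : 'I_n) :
  \sum_(u' < n) F u' * ((u == u')%:R) = F u.
Proof.
rewrite (bigD1 u) //= eqxx mulr1 big1 ?addr0 // => u' ne.
by rewrite eq_sym (negbTE ne) mulr0.
Qed.

Lemma claim1a m1 m2 : tau m1 (emb i 1) = tau m2 (emb i 1) -> m1 = m2.
Proof.
move/(congr1 h); rewrite !htau /sigma !rho_emb !fA_iM !ract1 => e.
apply/eqP; rewrite -subr_eq0; apply/eqP; apply: coords_eq0 => u.
have wi : (inl (u : nat) : RawWord) \in WL s t i dM (fun v => dA v).
  by rewrite mem_WL; exact: ltn_ord.
have := congr1 (fun phi : N => phi (SeqSub wi)) e.
rewrite !iM_at.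
under eq_bigr do rewrite inl_eqE.
under [RHS]eq_bigr do rewrite inl_eqE.
rewrite !sum_delta => e'.
by rewrite cfD -scaleN1r cfZ e' mulN1r subrr.
Qed.
Lemma fA1_i psi : fA (1 : A i) psi = iM (\sum_(t0 < dM) coefN psi (inl (t0 : nat)) *: bv M t0).
Proof.
apply/ffunP => y0; rewrite fA1_at iM_at.
have vy := Idx_valid y0.
case ey: (ssval y0) vy => [t0|[fw u]] vy.
  rewrite /= eqxx.
  under eq_bigr do rewrite inl_eqE.
  have tl : (t0 < dM)%N by [].
  rewrite -[t0]/(nat_of_ord (Ordinal tl)) sum_delta cf_expand /=.
  by rewrite -ey coefN_val.
rewrite (negbTE (validW_endi ac vy)) big1 // => u' _.
by rewrite mulr0.
Qed.

Lemma claim1b y : in_comp (emb i 1) y -> exists m, y = tau m (emb i 1).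
Proof.
case=> z ->.
exists (\sum_(t0 < dM) coefN (h z) (inl (t0 : nat)) *: bv M t0).
by rewrite -[LHS]gh h_ract rho_emb fA1_i g_iM.
Qed.

Lemma claim1c m a : tau (ract m a) (emb i 1) = ract (tau m (emb i 1)) (emb i a).
Proof. by rewrite bal1 -tauM -!(embM gd) mulr1 mul1r. Qed.

Local Notation FLj j := (FL s t i dM (fun v => dA v) j).

Definition fwl j (l : nat) := nth ([::], (0%N, [::])) (FLj j) l.

Lemma fwl_valid j l : (l < size (FLj j))%N -> validF j (fwl j l).
Proof. by move=> ll; rewrite /fwl -mem_FL mem_nth. Qed.

Definition xx j (l : nat) : X := g (nv (fwl j l) (1 : A j)).

Lemma xx_ract j l (a : A j) : (l < size (FLj j))%N ->
  ract (xx j l) (emb j a) = g (nv (fwl j l) a).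
Proof.
move=> ll; rewrite /xx -compat rho_emb fA_nv ?mul1r //.
exact: fwl_valid.
Qed.

Lemma claim2 j n : j != i -> n = size (FLj j) ->
  exists x : 'I_n -> X,
       (forall l, in_comp (emb j 1) (x l)) /\
       (forall a : 'I_n -> A j,
          \sum_(l < n) ract (x l) (emb j (a l)) = 0 -> forall l, a l = 0) /\
       (forall y : X, in_comp (emb j 1) y ->
          exists a : 'I_n -> A j, y = \sum_(l < n) ract (x l) (emb j (a l))).
Proof.
move=> ji en; exists (fun l => xx j l); split; [|split].
- move=> l; exists (xx j l); rewrite xx_ract ?mulr1 // -en; exact: ltn_ord.
- move=> a H l0.
  have ll0 : (l0 < size (FLj j))%N by rewrite -en ltn_ord.
  have H' : \sum_(l < n) nv (fwl j l) (a l) = 0.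
    transitivity (h (\sum_(l < n) ract (xx j l) (emb j (a l)))); last by rewrite H (lin0 hlin).
    rewrite (lin_sum hlin); apply: eq_bigr => l _; rewrite xx_ract ?hg // -en; exact: ltn_ord.
  apply: coords_eq0 => u.
  have wi : (inr (fwl j l0, (u : nat)) : RawWord) \in WL s t i dM (fun v => dA v).
    by rewrite mem_WL; apply: validW_inr; exact: fwl_valid.
  have := congr1 (fun phi : N => phi (SeqSub wi)) H'; rewrite sum_ffunE NzeroE => <-.
  rewrite (bigD1 l0) //= big1 ?addr0.
    rewrite nv_at; under eq_bigr do rewrite inr_eqE xpair_eqE eqxx andTb.
    by rewrite sum_delta.
  move=> l ne; rewrite nv_at big1 // => u' _.
  rewrite inr_eqE xpair_eqE /fwl nth_uniq ?uniq_FL // -?en ?ltn_ord //.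
  by rewrite (inj_eq val_inj) eq_sym (negbTE ne) mulr0.
- move=> y [z ->].
  set a' := fun l : 'I_n => \sum_(u < dA j) coefN (h z) (inr (fwl j l, (u : nat))) *: bv (A j) u.
  exists a'.
  rewrite -[LHS]gh h_ract rho_emb.
  transitivity (\sum_(l < n) g (nv (fwl j l) (a' l))); last first.
    by apply: eq_bigr => l _; rewrite xx_ract // -en ltn_ord.
  rewrite -(lin_sum g_lin); congr (g _).
  apply/ffunP => y0; rewrite fA1_at sum_ffunE.
  under eq_bigr do rewrite nv_at.
  have vy := Idx_valid y0.
  case ey: (ssval y0) vy => [t0|[fw0 u0]] vy.
    rewrite /= eq_sym (negbTE ji) big1 // => l _; rewrite big1 // => u _.
    by rewrite mulr0.
  rewrite /=; case: eqP => [ej|nej].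
  + have vf : validF j fw0 by case/andP: vy; rewrite ej.
    have ul : (u0 < dA j)%N by case/andP: vy; rewrite ej.
    have fin : fw0 \in FLj j by rewrite mem_FL.
    have il : (index fw0 (FLj j) < n)%N by rewrite en index_mem.
    rewrite (bigD1 (Ordinal il)) //= [X in _ + X]big1 ?addr0; last first.
      move=> l ne; rewrite big1 // => u _; rewrite inr_eqE xpair_eqE.
      have -> : (fw0 == fwl j l) = false.
        apply/negbTE/eqP => e; move/eqP: ne; apply; apply: val_inj => /=.
        by rewrite e /fwl index_uniq ?uniq_FL // -en ltn_ord.
      by rewrite mulr0.
    have ef : fwl j (Ordinal il) = fw0 by rewrite /fwl /= nth_index.
    rewrite ef.
    under eq_bigr do rewrite inr_eqE xpair_eqE eqxx andTb.
    rewrite -[u0]/(nat_of_ord (Ordinal ul)) sum_delta /a' cf_expand ef.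
    by rewrite -ey coefN_val.
  + rewrite big1 // => l _; rewrite big1 // => u _; rewrite inr_eqE xpair_eqE.
    have -> : (fw0 == fwl j l) = false.
      apply/negbTE/eqP => e; apply: nej.
      have : (l < size (FLj j))%N by rewrite -en ltn_ord.
      by move/fwl_valid; rewrite -e => /validF_end.
    by rewrite mulr0.
Qed.

End Main1.

Theorem mainTheorem6 (k : closedFieldType) (V E : finType) (s t : E -> V)
  (A : V -> falgType k) (L : falgType k) (emb : forall v, A v -> L) (arr : E -> L)
  (i : V) (M : rmod (A i)) (X : rmod L) (tau : M -> L -> X) :
  acyclic s t ->
  (forall v, basic (A v)) ->
  is_gpa s t emb arr ->
  is_cone emb tau ->
  (* M_i = M, via the natural map m |-> m (x) 1_i, an iso of A_i-modules *)
  ((forall m1 m2 : M, tau m1 (emb i 1) = tau m2 (emb i 1) -> m1 = m2) /\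
   (forall y : X, in_comp (emb i 1) y -> exists m : M, y = tau m (emb i 1)) /\
   (forall (m : M) (a : A i),
      tau (ract m a) (emb i 1) = ract (tau m (emb i 1)) (emb i a))) /\
  (* for j <> i, M_j is isomorphic to A_j^(n_j) as a right A_j-module *)
  (forall j : V, j != i ->
     let n := ncoef s t (\dim (fullv : {vspace M})) (fun v => \dim (fullv : {vspace A v})) i j in
     exists x : 'I_n -> X,
       (forall l, in_comp (emb j 1) (x l)) /\
       (forall a : 'I_n -> A j,
          \sum_(l < n) ract (x l) (emb j (a l)) = 0 -> forall l, a l = 0) /\
       (forall y : X, in_comp (emb j 1) y ->
          exists a : 'I_n -> A j, y = \sum_(l < n) ract (x l) (emb j (a l)))) /\
  (* in particular M_j = 0 if there is no path from i to j *)
  (forall j : V, j != i -> (forall p : seq E, ~~ is_qpath s t i j p) ->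
     forall y : X, in_comp (emb j 1) y -> y = 0).
Proof.
move=> ac _ gpa cone.
have [dM0|dMpos] := posnP (bd M).
  have M0 (m : M) : m = 0.
    rewrite (expand m); apply: big1 => u _.
    by have := leq_trans (ltn_ord u) (eq_leq dM0).
  have X0 (y : X) : y = 0.
    apply: (X_ext k V A L emb i M X tau cone X id (fun _ => 0)).
    - by move=> c x z.
    - by move=> c x z; rewrite scaler0 addr0.
    by move=> m l; rewrite (M0 m) (lin0 (tau_linl _ _ _ _ _ _ _ _ _ cone l)).
  split; [split; [|split]|split].
  - by move=> m1 m2 _; rewrite (M0 m1) (M0 m2).
  - by move=> y _; exists 0; rewrite (X0 y) (X0 (tau 0 _)).
  - by move=> m a; rewrite (X0 (tau _ _)) (X0 (ract _ _)).
  - move=> j ji n.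
    have n0 : n = 0%N.
      rewrite /n /ncoef; apply: big1 => r _; apply: big1 => p _.
      by have -> : \dim (fullv : {vspace M}) = 0%N by exact: dM0.
    exists (fun _ => 0); split; [|split].
    + by move=> l; exists 0; rewrite ract0.
    + by move=> a _ l; move: (ltn_ord l); rewrite {2}n0.
    + by move=> y _; exists (fun _ => 0); rewrite (X0 y); symmetry; apply: X0.
  - by move=> j _ _ y _; apply: X0.
have [[rho [rhoH [rho_emb rho_arr]]] _] :=
  gpa.2 (EB (Np_proof k V E s t A i M dMpos)) _ _ (gpa_model ac (Np_proof k V E s t A i M dMpos)).
have [[h [hlin htau]] _] := cone.2.2.2 _ _
  (sigma_bilin k V E s t A L i M dMpos rho rhoH)
  (sigma_bal k V E s t A L emb i M dMpos rho rhoH rho_emb).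
have C2 := claim2 k V E s t A L emb arr i M X tau ac gpa cone dMpos rho rhoH rho_emb rho_arr h hlin htau.
split; [split; [|split]|split].
- exact: (claim1a k V E s t A L emb i M X tau dMpos rho rho_emb h htau).
- exact: (claim1b k V E s t A L emb arr i M X tau ac gpa cone dMpos rho rhoH rho_emb rho_arr h hlin htau).
- exact: (claim1c k V E s t A L emb arr i M X tau gpa cone).
- move=> j ji n.
  exact: (C2 j n ji (esym (size_FL s t (bd M) (fun v => bd (A v)) ji))).
- move=> j ji np y yc.
  have H0 : size (FL s t i (bd M) (fun v => bd (A v)) j) = 0%N.
    case E0: (FL s t i (bd M) (fun v => bd (A v)) j) => [//|fw r].
    have : fw \in FL s t i (bd M) (fun v => bd (A v)) j by rewrite E0 mem_head.
    rewrite mem_FL => /and3P [] ; rewrite mem_PL => /and3P [_ _ q] _ _.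
    by have := np fw.1; rewrite q.
  have [x [_ [_ S]]] := C2 j 0%N ji (esym H0).
  by have [a ->] := S y yc; rewrite big_ord0.
Qed.
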